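(* Let $(E,X,Y)$, with $X=(X_1,\dots,X_d)$, be generated by a structural causal model whose graph is a DAG, whose distribution is faithful (and Markov) with respect to it, and in which $E$ is exogenous. Let $m<d$, define $S^m_{\mathrm{IAS}}:=\bigcup_{S\in\mathcal{MI},\,|S|\le m}S$, and let $m_{\min}$ and $m_{\max}$ be the size of a smallest and of a largest minimally invariant set, respectively. Then: (i) $S^m_{\mathrm{IAS}}\subseteq\mathrm{AN}_Y$; (ii) if $m\ge m_{\max}$, then $S^m_{\mathrm{IAS}}=S_{\mathrm{IAS}}$; (iii) if $m\ge m_{\min}$ and $E\notin\mathrm{PA}_Y$, then $S^m_{\mathrm{IAS}}\in\mathcal{I}$; (iv) if $m\ge m_{\min}$ and $E\notin\mathrm{PA}_Y$, then $S_{\mathrm{ICP}}\subseteq S^m_{\mathrm{IAS}}$, with equality if and only if $S_{\mathrm{ICP}}\in\mathcal{I}$.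
   Context: $\mathrm{PA}_Y$ and $\mathrm{AN}_Y$ are the parents and ancestors of $Y$ in the DAG (indices $j\in[d]$ identified with $X_j$). $S\subseteq[d]$ is invariant if $Y\perp\!\!\!\perp E\mid X_S$; $\mathcal{I}$ is the collection of invariant sets; $S$ is minimally invariant if $S\in\mathcal{I}$ and no proper subset of $S$ is in $\mathcal{I}$; $\mathcal{MI}$ is the collection of minimally invariant sets. $S_{\mathrm{IAS}}=\bigcup_{S\in\mathcal{MI}}S$ and $S_{\mathrm{ICP}}=\bigcap_{S\in\mathcal{I}}S$ (with $S_{\mathrm{ICP}}=\emptyset$ if $\mathcal{I}=\emptyset$; unions over empty collections are $\emptyset$). *)

(* Defs.v *)
From mathcomp Require Import all_boot.
Set Implicit Arguments. Unset Strict Implicit. Unset Printing Implicit Defensive.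

(* Nodes of the causal graph over (E, X_1..X_d, Y):
   None = E, Some None = Y, Some (Some j) = X_j. *)
Definition node (d : nat) : finType := option (option 'I_d).
Definition Enode {d} : node d := None.
Definition Ynode {d} : node d := Some None.
Definition Xnode {d} (j : 'I_d) : node d := Some (Some j).

Section Graph.
Variable d : nat.
Notation V := (node d).
Variable g : rel V.  (* g u v  <=>  directed edge u -> v *)

Definition acyclic : Prop := forall u v, g u v -> ~~ connect g v u.
Definition exogenous_E : Prop := forall v, ~~ g v Enode.

Definition adj (u v : V) : bool := g u v || g v u.
Definition collider (u v w : V) : bool := g u v && g w v.

Definition dconnected (Z : {set V}) (a b : V) : Prop :=
  exists p : seq V,
    [/\ path adj a p, last a p = b, uniq (a :: p) &
     forall i, 0 < i < size p ->
       let q := a :: p in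
       let u := nth a q i.-1 in let v := nth a q i in let w := nth a q i.+1 in
       if collider u v w then [exists z in Z, connect g v z] else v \notin Z].

Definition dseparated (Z : {set V}) (a b : V) : Prop := ~ dconnected Z a b.

Definition markov_faithful (indep : V -> V -> {set V} -> bool) : Prop :=
  forall (a b : V) (Z : {set V}), a != b -> a \notin Z -> b \notin Z ->
    (indep a b Z <-> dseparated Z a b).

Definition PA_Y : {set V} := [set v | g v Ynode].
Definition AN_Y : {set 'I_d} := [set j | connect g (Xnode j) Ynode].
End Graph.

Section Invariance.
Variable d : nat.
(* indep a b Z  <=>  a _||_ b | X_Z in the distribution of (E,X,Y) *)
Variable indep : node d -> node d -> {set node d} -> bool.

Definition XS (S : {set 'I_d}) : {set node d} := [set Xnode j | j in S].
Definition invariant (S : {set 'I_d}) : bool := indep Ynode Enode (XS S).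
Definition Icoll : {set {set 'I_d}} := [set S | invariant S].
Definition min_invariant (S : {set 'I_d}) : bool :=
  invariant S && [forall T : {set 'I_d}, (T \proper S) ==> ~~ invariant T].
Definition MIcoll : {set {set 'I_d}} := [set S | min_invariant S].
Definition S_IAS : {set 'I_d} := \bigcup_(S in MIcoll) S.
Definition S_IAS_m (m : nat) : {set 'I_d} := \bigcup_(S in MIcoll | #|S| <= m) S.
Definition S_ICP : {set 'I_d} :=
  if Icoll == set0 then set0 else \bigcap_(S in Icoll) S.
End Invariance.

(* Main.v *)
Require Import Defs.
From mathcomp Require Import all_boot.
From mathcomp Require Import zify.
Set Implicit Arguments. Unset Strict Implicit. Unset Printing Implicit Defensive.

Lemma last_take_nth (T : Type) (x : T) (s : seq T) n :
  n <= size s -> last x (take n s) = nth x (x :: s) n.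
Proof.
elim: s x n => [|y s IH] x n.
  by case: n.
case: n => [|n] /= H; first by case: s {IH H}.
by rewrite IH // (set_nth_default y) //=; lia.
Qed.

Lemma arith1 n m i0 : m < n -> n.-1 - m + i0 = (n - m + i0).-1.
Proof. lia. Qed.
Lemma arith3 n m i0 : m < n -> n.+1 - m + i0 = (n - m + i0).+1.
Proof. lia. Qed.

Section Proof.
Variable d : nat.
Variable g : rel (node d).
Hypothesis acyc : acyclic g.
Hypothesis exo : exogenous_E g.

Lemma no_back u v : g u v -> ~~ g v u.
Proof. move=> huv; apply/negP=> hvu. by move: (acyc hvu); rewrite connect1. Qed.

Lemma XS_mem (S : {set 'I_d}) j : (Xnode j \in XS S) = (j \in S).
Proof. by rewrite /XS mem_imset // => a b [] ->. Qed.

Lemma XS_inv (S : {set 'I_d}) v : v \in XS S -> exists2 j, v = Xnode j & j \in S.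
Proof. by case/imsetP => j jS ->; exists j. Qed.

Lemma Y_notin (S : {set 'I_d}) : (Ynode : node d) \notin XS S.
Proof. by apply/negP => /XS_inv [j]. Qed.

Lemma E_notin (S : {set 'I_d}) : (Enode : node d) \notin XS S.
Proof. by apply/negP => /XS_inv [j]. Qed.

Definition good (v : node d) := connect g v Ynode || (v == Enode).

Lemma good_ext v w : g v w -> good w -> good v.
Proof.
move=> hvw /orP[h|/eqP h].
  by apply/orP; left; apply: connect_trans (connect1 hvw) h.
by move: (exo v); rewrite -h hvw.
Qed.

Section Good.
Variable Zs : {set node d}.
Hypothesis ZsA : forall z, z \in Zs -> connect g z Ynode.
Variable p : seq (node d).
Hypothesis pth : path (adj g) Ynode p.
Hypothesis lst : last Ynode p = Enode.
Hypothesis un : uniq (Ynode :: p).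
Hypothesis cond : forall i, 0 < i < size p ->
       let q := Ynode :: p in
       let u := nth Ynode q i.-1 in let v := nth Ynode q i in let w := nth Ynode q i.+1 in
       if collider g u v w then [exists z in Zs, connect g v z] else v \notin Zs.

Let f n := nth Ynode (Ynode :: p) n.

Lemma fadj i : i < size p -> adj g (f i) (f i.+1).
Proof. by move=> H; move/(pathP Ynode): pth => /(_ i H). Qed.

Lemma flast : f (size p) = Enode.
Proof. by rewrite /f -lst -[last _ p]/(last Ynode (Ynode :: p)) -nth_last. Qed.

Lemma coll_good v : [exists z in Zs, connect g v z] -> good v.
Proof.
case/existsP => z /andP[zZ vz]; apply/orP; left.
exact: connect_trans vz (ZsA zZ).
Qed.

Lemma good_right n : forall i, i.+1 + n = size p -> g (f i) (f i.+1) -> good (f i.+1).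
Proof.
elim: n => [|n IH] i Hi e.
  by rewrite addn0 in Hi; rewrite Hi flast /good eqxx orbT.
have Hc := cond (i:=i.+1). rewrite /= in Hc.
have /Hc : 0 < i.+1 < size p by apply/andP; split => //; lia.
rewrite /collider -/(f i) -/(f i.+1) -/(f i.+2) e /=.
case: ifP => [_|hw _]; first exact: coll_good.
have a : adj g (f i.+1) (f i.+2) by apply: fadj; lia.
have e2 : g (f i.+1) (f i.+2) by move: a; rewrite /adj hw orbF.
have h2 : i.+2 + n = size p by lia.
exact: (good_ext e2 (IH _ h2 e2)).
Qed.

Lemma good_left i : i.+1 <= size p -> g (f i.+1) (f i) -> good (f i).
Proof.
elim: i => [|i IH] Hi e.
  by rewrite /f /= /good connect0.
have Hc := cond (i:=i.+1). rewrite /= in Hc.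
have /Hc : 0 < i.+1 < size p by apply/andP; split => //; lia.
rewrite /collider -/(f i) -/(f i.+1) -/(f i.+2) e andbT.
case: ifP => [_|hu _]; first exact: coll_good.
have a : adj g (f i) (f i.+1) by apply: fadj; lia.
have e2 : g (f i.+1) (f i) by move: a; rewrite /adj hu.
have h2 : i.+1 <= size p by lia.
exact: (good_ext e2 (IH h2 e2)).
Qed.

Lemma interior_anc i : 0 < i < size p -> ~~ collider g (f i.-1) (f i) (f i.+1) ->
  connect g (f i) Ynode.
Proof.
move=> /andP[i0 ip] nc.
have gd : good (f i).
  move: nc; rewrite /collider negb_and => /orP[hu|hw].
    have a : adj g (f i.-1) (f i.-1.+1) by apply: fadj; lia.
    rewrite prednK // in a.
    have e : g (f i) (f i.-1) by move: a; rewrite /adj (negbTE hu).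
    have h2 : i.-1.+1 <= size p by lia.
    have e' : g (f i.-1.+1) (f i.-1) by rewrite prednK.
    exact: (good_ext e (good_left h2 e')).
  have a : adj g (f i) (f i.+1) by apply: fadj; lia.
  have e : g (f i) (f i.+1) by move: a; rewrite /adj (negbTE hw) orbF.
  have h2 : i.+1 + (size p - i.+1) = size p by lia.
  exact: (good_ext e (good_right h2 e)).
case/orP: gd => // /eqP hE.
have : f i == f (size p) by rewrite hE flast.
by rewrite /f nth_uniq //= ?(ltn_eqF ip) // ltnS ltnW.
Qed.

Lemma interior_X i : 0 < i < size p -> exists j, f i = Xnode j.
Proof.
move=> /andP[i0 ip].
have hE : f i != f (size p) by rewrite /f nth_uniq //= ?(ltn_eqF ip) // ltnS ltnW.
have hY : f i != f 0 by rewrite /f nth_uniq //= ?(gtn_eqF i0) // ltnS ltnW.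
rewrite flast in hE; move: hE hY; rewrite /f /=.
by case: (nth _ _ i) => [[j|]|] //; exists j.
Qed.
End Good.

Lemma trip_eq (Zs : {set node d}) (u v w u' v' w' : node d) : u = u' -> v = v' -> w = w' ->
  (if collider g u' v' w' then [exists z in Zs, connect g v' z] else v' \notin Zs) ->
  (if collider g u v w then [exists z in Zs, connect g v z] else v \notin Zs).
Proof. by move=> -> -> ->. Qed.

Lemma anc_conn (Z : {set 'I_d}) :
  dconnected g (XS (Z :&: AN_Y g)) Ynode Enode -> dconnected g (XS Z) Ynode Enode.
Proof.
case=> p [pth lst un cond].
have ZsA : forall z, z \in XS (Z :&: AN_Y g) -> connect g z Ynode.
  by move=> z /XS_inv [j -> ]; rewrite inE => /andP[_]; rewrite inE.
exists p; split => // i Hi.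
have := cond i Hi. rewrite /=.
case: ifP => hc.
  case/existsP => z /andP[zZ vz]; apply/existsP; exists z; rewrite vz andbT.
  by case/XS_inv: zZ => j -> ; rewrite !XS_mem inE; case/andP.
move=> hn.
have hanc := interior_anc ZsA pth lst un cond Hi (negbT hc).
case: (interior_X lst un Hi) => j hj.
move: hn hanc; rewrite hj !XS_mem inE => hn hanc.
by apply/negP=> jZ; move: hn; rewrite jZ /= inE hanc.
Qed.

Definition gr (Z : {set 'I_d}) : rel (node d) :=
  fun u v => g v u && (u \notin XS Z) && (v \notin XS Z).

Lemma desc_gr Z v : connect g v Ynode -> ~~ [exists z in XS Z, connect g v z] ->
  connect (gr Z) Ynode v.
Proof.
case/connectP => s ps ->.
elim: s v ps => [|y s IH] v /= ps nz; first exact: connect0.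
case/andP: ps => gvy ps.
have vn : v \notin XS Z.
  apply/negP=> vZ; move/negP: nz; apply; apply/existsP; exists v; by rewrite vZ connect0.
have nzy : ~~ [exists z in XS Z, connect g y z].
  apply/negP => /existsP [z /andP[zZ yz]]; move/negP: nz; apply; apply/existsP; exists z.
  by rewrite zZ /=; apply: connect_trans (connect1 gvy) yz.
have yn : y \notin XS Z.
  apply/negP=> yZ; move/negP: nzy; apply; apply/existsP; exists y; by rewrite yZ connect0.
apply: connect_trans (IH y ps nzy) (connect1 _).
by rewrite /gr gvy vn yn.
Qed.

Lemma mono_conn (Z W : {set 'I_d}) : Z \subset W -> W \subset AN_Y g ->
  dconnected g (XS W) Ynode Enode -> dconnected g (XS Z) Ynode Enode.
Proof.
move=> ZW WA [p [pth lst un cond]].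
pose P := fun n => (n <= size p) && connect (gr Z) Ynode (nth Ynode (Ynode :: p) n).
have exP : exists n, P n by exists 0; rewrite /P leq0n connect0.
have ubP : forall n, P n -> n <= size p by move=> n /andP[].
case: (ex_maxnP exP ubP) => i0 /andP[i0p ci0] imax.
have key : forall j, i0 < j <= size p ->
    ~~ connect (gr Z) Ynode (nth Ynode (Ynode :: p) j).
  move=> j /andP[h1 h2]; apply/negP => hc.
  by have := imax j; rewrite /P h2 hc => /(_ isT); rewrite leqNgt h1.
case/connectP: ci0 => s ps; move=> ls; move: ls.
case: (shortenP ps) => D pD uD _ ls.
have XSZW : XS Z \subset XS W by apply: imsetS.
have WY : forall z, z \in XS W -> connect g z Ynode.
  by move=> z /XS_inv [j -> jW]; move/subsetP: WA => /(_ j jW); rewrite inE.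
have up : uniq p by case/andP: un.
have pt : path (adj g) (nth Ynode (Ynode :: p) i0) (drop i0 p).
  move: pth; rewrite -{1}(cat_take_drop i0 p) cat_path => /andP[_].
  by rewrite last_take_nth.
have lt : last (nth Ynode (Ynode :: p) i0) (drop i0 p) = Enode.
  by move: lst; rewrite -{1}(cat_take_drop i0 p) last_cat last_take_nth.
set m := size D.
have Hlo : forall n, n <= m -> nth Ynode (Ynode :: D ++ drop i0 p) n = nth Ynode (Ynode :: D) n.
  by move=> n H; rewrite -cat_cons nth_cat /= ltnS H.
have Hhi : forall n, m <= n -> nth Ynode (Ynode :: D ++ drop i0 p) n =
                               nth Ynode (Ynode :: p) (n - m + i0).
  move=> n H; rewrite -cat_cons lastI cat_rcons -ls.
  rewrite (_ : nth Ynode (Ynode :: p) i0 :: drop i0 p = drop i0 (Ynode :: p)); last first.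
    by rewrite [RHS](drop_nth Ynode) //= ltnS.
  by rewrite nth_cat size_belast ltnNge H /= nth_drop addnC.
have pDn : forall j, j < m -> gr Z (nth Ynode (Ynode :: D) j) (nth Ynode (Ynode :: D) j.+1).
  by move=> j H; move/(pathP Ynode): pD => /(_ j H).
exists (D ++ drop i0 p); split.
- rewrite cat_path; apply/andP; split.
    by apply: sub_path pD => x y /andP[/andP[h _] _]; rewrite /adj h orbT.
  by rewrite -ls.
- by rewrite last_cat -ls.
- rewrite -cat_cons cat_uniq uD drop_uniq // andbT /=.
  apply/hasPn => x /(nthP Ynode) [r rlt <-]; rewrite nth_drop.
  apply/negP => /(path_connect pD) hc.
  rewrite size_drop in rlt.
  have kk : i0 < (i0 + r).+1 <= size p by rewrite ltnS leq_addr /= -ltn_subRL.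
  by move: (key _ kk); rewrite /= hc.
- move=> n /andP[n0 nlt]; rewrite size_cat size_drop -/m in nlt.
  case: (ltngtP n m) => nm.
  + have E1 := Hlo n.-1 (leq_trans (leq_pred n) (ltnW nm)).
    have E2 := Hlo n (ltnW nm).
    have E3 := Hlo n.+1 nm.
    cbv zeta; apply: (trip_eq E1 E2 E3).
    have nm1 : n.-1 < m by apply: leq_ltn_trans (leq_pred n) nm.
    have e1 := pDn n.-1 nm1; rewrite prednK // in e1.
    case/andP: e1 => /andP[e1 _] vn.
    by rewrite /collider (negbTE (no_back e1)).
  + have Hj : 0 < n - m + i0 < size p by apply/andP; split; lia.
    have h1 : m <= n.-1 by rewrite -ltnS prednK.
    have E1 := Hhi n.-1 h1.
    have E2 := Hhi n (ltnW nm).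
    have E3 := Hhi n.+1 (leqW (ltnW nm)).
    have I1 : n.-1 - m + i0 = (n - m + i0).-1 by apply: arith1.
    have I3 : n.+1 - m + i0 = (n - m + i0).+1 by apply: arith3.
    rewrite I1 in E1; rewrite I3 in E3.
    cbv zeta; apply: (trip_eq E1 E2 E3).
    move: (cond _ Hj); cbv zeta; case: ifP => hc.
      move=> hW; case: (boolP [exists z in XS Z, connect g _ z]) => // nz.
      exfalso; case/existsP: hW => z /andP[zW vz].
      have := desc_gr (connect_trans vz (WY z zW)) nz.
      apply/negP; apply: key; case/andP: Hj => _ Hj2; apply/andP; split; last exact: ltnW.
      by rewrite -{1}(add0n i0) ltn_add2r subn_gt0.
    by apply: contra => /(subsetP XSZW).
  + have E1 := Hlo n.-1 (leq_trans (leq_pred n) (eq_leq nm)).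
    have E2 := Hlo n (eq_leq nm).
    have E3 := Hhi n.+1 (leqW (eq_leq (esym nm))).
    cbv zeta; apply: (trip_eq E1 E2 E3).
    have nm1 : n.-1 < m by rewrite -nm prednK.
    have e1 := pDn n.-1 nm1; rewrite prednK // in e1.
    case/andP: e1 => /andP[e1 _] vn.
    by rewrite /collider (negbTE (no_back e1)).
Qed.

End Proof.
Theorem proposition5 (d : nat) (g : rel (node d))
    (indep : node d -> node d -> {set node d} -> bool) (m : nat) :
  acyclic g -> exogenous_E g -> markov_faithful g indep -> m < d ->
  [/\ (* (i) *) S_IAS_m indep m \subset AN_Y g,
      (* (ii) m >= m_max *)
      ((forall S, S \in MIcoll indep -> #|S| <= m) ->
         S_IAS_m indep m = S_IAS indep),
      (* (iii) m >= m_min, E notin PA_Y *)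
      ((exists2 S, S \in MIcoll indep & #|S| <= m) -> Enode \notin PA_Y g ->
         S_IAS_m indep m \in Icoll indep) &
      (* (iv) *)
      ((exists2 S, S \in MIcoll indep & #|S| <= m) -> Enode \notin PA_Y g ->
         S_ICP indep \subset S_IAS_m indep m /\
         (S_ICP indep = S_IAS_m indep m <-> S_ICP indep \in Icoll indep))].

Proof.
move=> acyc exo MF _.
have inv_iff : forall S : {set 'I_d}, Defs.invariant indep S <-> ~ dconnected g (XS S) Ynode Enode.
  by move=> S; apply: MF; [by [] | exact: Y_notin | exact: E_notin].
have anc : forall S : {set 'I_d}, Defs.invariant indep S -> Defs.invariant indep (S :&: AN_Y g).
  move=> S /inv_iff h; apply/inv_iff => c; apply: h; exact: (anc_conn exo c).
have mono : forall Z W : {set 'I_d}, Z \subset W -> W \subset AN_Y g ->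
    Defs.invariant indep Z -> Defs.invariant indep W.
  move=> Z W ZW WA /inv_iff h; apply/inv_iff => c; apply: h; exact: (mono_conn acyc ZW WA c).
have MIsub : forall S : {set 'I_d}, S \in MIcoll indep -> S \subset AN_Y g.
  move=> S; rewrite inE => /andP[iS /forallP mS].
  have := mS (S :&: AN_Y g).
  case: (boolP ((S :&: AN_Y g) \proper S)) => pr /=.
    by rewrite (anc _ iS).
  move=> _; move: pr; rewrite properE subsetIl /= negbK subsetI => /andP[_ ->] //.
have WA : S_IAS_m indep m \subset AN_Y g.
  by apply/bigcupsP => S /andP[SM _]; exact: MIsub.
have W_inv : (exists2 S, S \in MIcoll indep & #|S| <= m) -> S_IAS_m indep m \in Icoll indep.
  case=> S0 S0M S0m; rewrite inE.
  have S0W : S0 \subset S_IAS_m indep m.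
    by apply: (bigcup_sup S0 (P := fun S => (S \in MIcoll indep) && (#|S| <= m))); rewrite S0M.
  apply: (mono _ _ S0W WA).
  by move: S0M; rewrite inE => /andP[].
split => //.
- move=> H; rewrite /S_IAS_m /S_IAS; apply: eq_bigl => S.
  by case SM: (S \in MIcoll indep) => //=; rewrite H.
- by move=> ex _; exact: W_inv.
move=> ex _; have Winv := W_inv ex; case: ex => S0 S0M S0m.
have S0W : S0 \subset S_IAS_m indep m.
  by apply: (bigcup_sup S0 (P := fun S => (S \in MIcoll indep) && (#|S| <= m))); rewrite S0M.
have S0I : S0 \in Icoll indep by move: S0M; rewrite !inE => /andP[].
rewrite /S_ICP; case: ifP => [/eqP E0|_]; first by rewrite E0 inE in S0I.
have Csub : \bigcap_(S in Icoll indep) S \subset S_IAS_m indep m.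
  exact: subset_trans (bigcap_inf _ S0I) S0W.
split => //; split => [->|CI] //.
apply/eqP; rewrite eqEsubset Csub /=.
apply/bigcupsP => S /andP[SM _].
move: SM; rewrite inE => /andP[iS /forallP mS].
have SI : S \in Icoll indep by rewrite inE.
have CS : \bigcap_(S in Icoll indep) S \subset S := bigcap_inf _ SI.
have := mS (\bigcap_(S in Icoll indep) S).
move: CI; rewrite inE => CI.
case: (boolP (\bigcap_(S in Icoll indep) S \proper S)) => pr /=.
  by rewrite CI.
by move=> _; move: pr; rewrite properE CS /= negbK.
Qed.
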